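(* Let $N\in\mathbb{N}$ and $X_1,X_2\subseteq[N]$ with $|X_1|\cdot|X_2|=N$, $X=(X_1,X_2)$, and let $\mu=\mathbb{E}_{\sigma\sim\mathcal D_X}[|X_\sigma|]$. Then for every real $u\ge 6\mu$, $$\Pr_{\pi\sim\mathcal D_X}\big[|X_\pi|\ge \mu+u\big]\le 3\exp\!\left(-\tfrac{4u}{9}\right).$$
   Context: For $\pi\in S_N$, $X_\pi=\{(i,j): i\in X_1,\ j\in X_2,\ \pi(i)=j\}$ is the set of $X$-pairs of $\pi$. The distribution $\mathcal{D}_X$ on $S_N$ is defined by $\Pr_{\Phi\sim\mathcal D_X}[\Phi=\varphi]=|X_\varphi|/\sum_{\sigma\in S_N}|X_\sigma|$ for $\varphi\in S_N$. *)

(* Defs.v *)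
From HB Require Import structures.
From mathcomp Require Import all_boot all_order all_algebra all_fingroup.
From mathcomp Require Import all_classical all_reals.
From mathcomp Require Import sequences exp.
Set Implicit Arguments. Unset Strict Implicit. Unset Printing Implicit Defensive.
Import Order.TTheory GRing.Theory Num.Theory.
Local Open Scope ring_scope.

(* [N] = 'I_N (elements 0..N-1); S_N = {perm 'I_N}. *)

Definition Xpairs (N : nat) (X1 X2 : {set 'I_N}) (pi : {perm 'I_N}) : nat :=
  #|[set i in X1 | pi i \in X2]|.

Definition DX (R : realType) (N : nat) (X1 X2 : {set 'I_N}) (phi : {perm 'I_N}) : R :=
  (Xpairs X1 X2 phi)%:R / (\sum_(sigma : {perm 'I_N}) (Xpairs X1 X2 sigma)%:R).

Definition muX (R : realType) (N : nat) (X1 X2 : {set 'I_N}) : R :=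
  \sum_(sigma : {perm 'I_N}) DX R X1 X2 sigma * (Xpairs X1 X2 sigma)%:R.

Definition PrX_ge (R : realType) (N : nat) (X1 X2 : {set 'I_N}) (t : R) : R :=
  \sum_(pi : {perm 'I_N} | t <= (Xpairs X1 X2 pi)%:R) DX R X1 X2 pi.

Arguments DX R {N} X1 X2 phi.
Arguments muX R {N} X1 X2.
Arguments PrX_ge R {N} X1 X2 t.

(* Main.v *)
Require Import Defs.
From HB Require Import structures.
From mathcomp Require Import all_boot all_order all_algebra all_fingroup.
From mathcomp Require Import zify.
Import Order.TTheory GRing.Theory Num.Theory.
Set Implicit Arguments. Unset Strict Implicit.
Local Open Scope nat_scope.

Lemma card_sum (U : finType) (P : U -> bool) : #|[set x | P x]| = \sum_x P x.
Proof.
by rewrite -sum1dep_card big_mkcond /=; apply: eq_bigr => x _; case: (P x).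
Qed.

Section Comb.
Variable T : finType.

Lemma imset_permM (s t : {perm T}) (A : {set T}) : (s * t)%g @: A = t @: (s @: A).
Proof. by rewrite -imset_comp; apply: eq_imset => x; rewrite permM. Qed.

Lemma mem_imset_perm (s : {perm T}) (A : {set T}) z : (z \in s @: A) = (s^-1%g z \in A).
Proof. by rewrite -[z in LHS](permKV s) mem_imset //; apply: perm_inj. Qed.


Lemma exists_perm_map (B C : {set T}) :
  #|B| = #|C| -> exists tau : {perm T}, tau @: B = C.
Proof.
move: {2}#|B :\: C| (leqnn #|B :\: C|) => n.
elim: n B => [|n IH] B hn hBC.
  have : B :\: C = set0 by apply/eqP; rewrite -cards_eq0 -leqn0; exact: hn.
  move/eqP; rewrite setD_eq0 => sBC.
  have -> : B = C by apply/eqP; rewrite eqEcard sBC hBC leqnn.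
  by exists 1%g; apply/setP => z; rewrite mem_imset_perm invg1 perm1.
case: (set_0Vmem (B :\: C)) => [e|[x hx]].
  move/eqP: e; rewrite setD_eq0 => sBC.
  have -> : B = C by apply/eqP; rewrite eqEcard sBC hBC leqnn.
  by exists 1%g; apply/setP => z; rewrite mem_imset_perm invg1 perm1.
have hcd : #|C :\: B| = #|B :\: C|.
  have h1 := cardsID C B; have h2 := cardsID B C.
  rewrite setIC in h2; lia.
have : 0 < #|C :\: B| by rewrite hcd; apply/card_gt0P; exists x.
case/card_gt0P => y hy.
set s := tperm x y.
have hsub : s @: B :\: C \subset (B :\: C) :\ x.
  apply/subsetP => z; rewrite !inE mem_imset_perm /s tpermV.
  move: hx hy; rewrite !inE => /andP[hxC hxB] /andP[hyB hyC].
  case: tpermP => [-> | -> | hzx hzy].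
  - by rewrite (negbTE hyB) andbF.
  - by rewrite hyC.
  - by move=> ->; rewrite andbT; apply/eqP.
have hcard : #|s @: B :\: C| <= n.
  have := subset_leq_card hsub; have := cardsD1 x (B :\: C); rewrite hx /=; lia.
have [tau htau] := IH _ hcard (etrans (card_imset _ perm_inj) hBC).
by exists (s * tau)%g; rewrite imset_permM.
Qed.

Lemma card_fiber (A B : {set T}) : #|A| = #|B| ->
  #|[set s : {perm T} | s @: A == B]| * 'C(#|T|, #|A|) = #|T|`!.
Proof.
move=> hAB.
pose f (B0 : {set T}) := #|[set s : {perm T} | s @: A == B0]|.
have le_f (B1 B2 : {set T}) : #|B1| = #|A| -> #|B2| = #|A| -> f B1 <= f B2.
  move=> h1 h2; have [tau htau] := exists_perm_map (B := B1) (C := B2) (etrans h1 (esym h2)).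
  rewrite /f -(card_imset _ (mulIg tau)); apply: subset_leq_card.
  apply/subsetP => _ /imsetP[s hs ->]; rewrite inE in hs; rewrite inE imset_permM (eqP hs) htau //.
have hsum : \sum_(B0 in [set B0 : {set T} | #|B0| == #|A|]) f B0 = #|T|`!.
  rewrite /f; under eq_bigr => B0 _ do rewrite (card_sum (fun s : {perm T} => s @: A == B0)).
  rewrite exchange_big /=.
  rewrite (eq_bigr (fun _ => 1)); last first.
    move=> s _; rewrite (bigD1 (s @: A)) /=; last by rewrite inE card_imset //; apply: perm_inj.
    rewrite eqxx big1 // => B0 /andP[_ hB0]; rewrite eq_sym in hB0; by rewrite (negbTE hB0).
  rewrite sum1_card.
  have -> : #|T|`! = #|perm_on [set: T]| by rewrite card_perm cardsT.
  by apply: eq_card => s; rewrite [LHS]/= ; symmetry; apply/subsetP => z _; rewrite inE.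
rewrite (eq_bigr (fun _ => f B)) in hsum; last first.
  move=> B0; rewrite inE => /eqP h; apply/eqP; rewrite eqn_leq !le_f //.
rewrite sum_nat_const card_draws in hsum.
by rewrite mulnC.
Qed.

Lemma sum_binom (X1 X2 : {set T}) m :
  \sum_(s : {perm T}) 'C(#|[set i in X1 | s i \in X2]|, m) * 'C(#|T|, m)
  = 'C(#|X1|, m) * 'C(#|X2|, m) * #|T|`!.
Proof.
pose DA := [set A : {set T} | A \subset X1 & #|A| == m].
pose DB := [set B : {set T} | B \subset X2 & #|B| == m].
have step (s : {perm T}) : 'C(#|[set i in X1 | s i \in X2]|, m)
    = \sum_(A in DA) \sum_(B in DB) (s @: A == B : nat).
  rewrite -cards_draws (card_sum (fun A : {set T} => (A \subset [set i in X1 | s i \in X2]) && (#|A| == m))).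
  rewrite [RHS]big_mkcond /=; apply: eq_bigr => A _.
  have -> : [set i in X1 | s i \in X2] = X1 :&: s @^-1: X2 by apply/setP => i; rewrite !inE.
  rewrite subsetI -sub_imset_pre inE.
  case hA1: (A \subset X1); case hAm: (#|A| == m); rewrite /= ?andbF //=.
  case hs: (s @: A \subset X2).
    rewrite (bigD1 (s @: A)) /=; last by rewrite inE hs (card_imset _ (@perm_inj _ s)) hAm.
    by rewrite eqxx big1 // => B /andP[_ hB]; rewrite eq_sym (negbTE hB).
  rewrite /= big1 // => B; rewrite inE => /andP[hB _].
  by case e: (s @: A == B) => //; rewrite (eqP e) hB in hs.
rewrite -big_distrl /=.
under eq_bigr => s _ do rewrite step.
rewrite exchange_big /=.
under eq_bigr => A _ do rewrite exchange_big /=.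
rewrite big_distrl /=.
rewrite (eq_bigr (fun _ => 'C(#|X2|, m) * #|T|`!)); last first.
  move=> A; rewrite inE => /andP[_ /eqP hA].
  rewrite big_distrl /= (eq_bigr (fun _ => #|T|`!)); last first.
    move=> B; rewrite inE => /andP[_ /eqP hB].
    rewrite -(card_sum (fun s : {perm T} => s @: A == B)) -hA card_fiber //.
    by rewrite hA hB.
  by rewrite sum_nat_const cards_draws.
by rewrite sum_nat_const cards_draws mulnA.
Qed.

Lemma ffact_mul_le a b m : a ^_ m * b ^_ m <= (a * b) ^_ m.
Proof.
elim: m => [|m IH]; first by rewrite !ffactn0.
rewrite !ffactnSr.
have h : (a - m) * (b - m) <= a * b - m by nia.
have := leq_mul IH h.
by rewrite -!mulnA (mulnCA (a - m)).
Qed.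

Lemma bin_mul_le a b m : 'C(a, m) * 'C(b, m) * m`! <= 'C(a * b, m).
Proof.
rewrite -(leq_pmul2r (fact_gt0 m)).
have -> : 'C(a,m) * 'C(b,m) * m`! * m`! = ('C(a,m) * m`!) * ('C(b,m) * m`!).
  by rewrite !mulnA (mulnAC _ 'C(b,m)).
rewrite !bin_ffact.
exact: ffact_mul_le.
Qed.

Lemma sum_x (X1 X2 : {set T}) : #|X1| * #|X2| = #|T| -> 0 < #|T| ->
  \sum_(s : {perm T}) #|[set i in X1 | s i \in X2]| = #|T|`!.
Proof.
move=> h hT; have e := sum_binom X1 X2 1.
rewrite -big_distrl /= (eq_bigr _ (fun s _ => bin1 _)) !bin1 h in e.
by apply/eqP; rewrite -(eqn_pmul2r hT) e mulnC.
Qed.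

Lemma sum_C_le (X1 X2 : {set T}) m : #|X1| * #|X2| = #|T| -> 0 < m ->
  m`! * \sum_(s : {perm T}) 'C(#|[set i in X1 | s i \in X2]|, m) <= #|T|`!.
Proof.
move=> h hm; case: (leqP m #|T|) => hmT.
  have hC : 0 < 'C(#|T|, m) by rewrite bin_gt0.
  rewrite -(leq_pmul2r hC) -mulnA big_distrl /= sum_binom.
  have := bin_mul_le #|X1| #|X2| m; rewrite h => hb.
  have := leq_mul hb (leqnn #|T|`!); by rewrite mulnCA mulnA (mulnC #|T|`!).
rewrite big1 ?muln0 // => s _; apply: bin_small.
exact: leq_ltn_trans (max_card _) hmT.
Qed.

End Comb.

Lemma le_mbin k m : 0 < m -> (k == 0) || (m <= k) -> k <= m * 'C(k, m).
Proof.
case: m => [//|m] _; case: k => [//|k] /= hk.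
rewrite -mul_bin_diag /=; apply: leq_pmulr; by rewrite bin_gt0.
Qed.


Unset Implicit Arguments. Set Strict Implicit.
From mathcomp Require Import all_classical all_reals.
From mathcomp Require Import sequences exp.
From mathcomp Require Import lra.
Import Order.TTheory GRing.Theory Num.Theory.
Local Open Scope ring_scope.

Lemma qpow (R : realType) (q : R) (k : nat) : 0 <= q -> q <= 81/49 ->
  q ^+ k.+1 <= 3 * (k`!)%:R.
Proof.
move=> q0 q1; elim: k => [|k IH]; first by rewrite expr1 fact0; lra.
rewrite exprS factS natrM.
have P0 : 0 <= q ^+ k.+1 by apply: exprn_ge0.
have F0 : 1 <= (k`!)%:R :> R by rewrite ler1n fact_gt0.
case: k IH P0 F0 => [|k] IH P0 F0.
  rewrite expr1 fact0 /=; nra.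
have K2 : 2 <= (k.+2)%:R :> R by rewrite (ler_nat R 2).
nra.
Qed.

Lemma Rfinal (R : realType) (m : nat) (u : R) : (0 < m)%N -> u <= m%:R ->
  m%:R / (m`!)%:R <= 3 * expR (- (4 * u / 9)).
Proof.
move=> m0 um.
have e0 := expR_gt0 (2/9 : R).
have e1 : expR (2/9 : R) <= 9/7.
  have h := expR_ge1Dx (- (2/9 : R)).
  have h2 := expRxMexpNx_1 (2/9 : R).
  nra.
set q := expR (4/9 : R).
have hq : q = expR (2/9) ^+ 2 by rewrite /q expr2 -expRD; congr expR; lra.
have q0 : 0 <= q by rewrite /q expR_ge0.
have q1 : q <= 81/49 by rewrite hq expr2; nra.
have step : expR (- (4 * m%:R / 9)) <= expR (- (4 * u / 9)) :> R.
  rewrite ler_expR; lra.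
apply: le_trans (ler_wpM2l _ step); last by [].
have -> : 4 * m%:R / 9 = m%:R * (4/9 : R) by lra.
rewrite expRN expRM_natl -/q.
case: m m0 {um step} => [//|k] _.
rewrite factS natrM invfM mulrA divff ?mul1r ?pnatr_eq0 //.
have qp : 0 < q ^+ k.+1 by apply: exprn_gt0; rewrite /q expR_gt0.
have fp : 0 < (k`!)%:R :> R by rewrite ltr0n fact_gt0.
rewrite -[3 * _]/(3 / _) ler_pdivlMr // mulrC ler_pdivrMr //.
exact: qpow.
Qed.

Theorem theorem3 (R : realType) (N : nat) (X1 X2 : {set 'I_N})
  (hcard : (#|X1| * #|X2|)%N = N) (u : R) (hu : 6 * muX R X1 X2 <= u) :
  PrX_ge R X1 X2 (muX R X1 X2 + u) <= 3 * expR (- (4 * u / 9)).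
Proof.
pose x (s : {perm 'I_N}) := Xpairs X1 X2 s.
have mu0 : 0 <= muX R X1 X2.
  rewrite /muX; apply: sumr_ge0 => s _; apply: mulr_ge0 => //.
  by rewrite /DX; apply: divr_ge0 => //; apply: sumr_ge0.
have u0 : 0 <= u by lra.
set t := muX R X1 X2 + u.
have ut : u <= t by rewrite /t; lra.
rewrite /PrX_ge /DX -mulr_suml.
case: (posnP N) => [N0 | Npos].
  rewrite big1 ?mul0r; first by rewrite mulr_ge0 // expR_ge0.
  move=> s _; apply/eqP; rewrite pnatr_eq0 -leqn0 /Xpairs.
  by apply: leq_trans (max_card _) _; rewrite card_ord N0.
have hS : \sum_(s : {perm 'I_N}) (Xpairs X1 X2 s)%:R = (N`!)%:R :> R.
  by rewrite -natr_sum /Xpairs sum_x card_ord.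
rewrite hS.
have [n hn] : exists n : nat, Num.ceil t = n%:Z.
  exists `|Num.ceil t|%N; rewrite gez0_abs // Num.Theory.ceil_ge0; lra.
have tn : t <= n%:R.
  by have := Num.Theory.ceil_ge t; rewrite hn.
have nmin (k : nat) : t <= k%:R -> (n <= k)%N.
  move=> h; have : Num.ceil t <= k%:Z by rewrite Num.Theory.ceil_le_int.
  by rewrite hn lez_nat.
pose m := maxn 1 n.
have m0 : (0 < m)%N by rewrite /m leq_max.
have um : u <= m%:R.
  apply: le_trans ut (le_trans tn _); rewrite ler_nat /m leq_max leqnn orbT //.
have num : \sum_(pi | t <= (Xpairs X1 X2 pi)%:R) (Xpairs X1 X2 pi)%:R
    <= (m * \sum_(s : {perm 'I_N}) 'C(Xpairs X1 X2 s, m))%:R :> R.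
  rewrite big_distrr natr_sum big_mkcond /=; apply: ler_sum => s _.
  case: ifP => h; last by [].
  rewrite ler_nat; apply: le_mbin => //.
  have := nmin _ h; case: (Xpairs X1 X2 s) => [//|k] hk /=.
  by rewrite /m geq_max hk.
have fp : 0 < (N`!)%:R :> R by rewrite ltr0n fact_gt0.
have mfp : 0 < (m`!)%:R :> R by rewrite ltr0n fact_gt0.
apply: (le_trans _ (Rfinal R m u m0 um)).
rewrite ler_pdivrMr // mulrAC ler_pdivlMr //.
apply: le_trans (_ : ((m * \sum_(s : {perm 'I_N}) 'C(Xpairs X1 X2 s, m))%:R * (m`!)%:R <= _)).
  by rewrite ler_wpM2r // ltW.
rewrite -!natrM ler_nat.
have h' : (#|X1| * #|X2| = #|'I_N|)%N by rewrite card_ord.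
have := sum_C_le h' m0; rewrite card_ord => hle.
have := leq_mul (leqnn m) hle; rewrite /Xpairs.
by rewrite -mulnA (mulnC _ m`!).
Qed.
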